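(* Let $a\neq0$ be a real constant and $\phi(x,z)=(x,\,f(x)g(z+ax),\,z)$ an affine factorable surface of the second kind in $G_3^1$ with $1-(fg')^2>0$. If its Gaussian curvature is a non-zero constant $K_o$, then the surface takes the form $y(x,z)=\left(g_o(z+ax)+\lambda_2\right)\left(\pm\frac{1}{g_o}\tanh\left[\sqrt{K_o}\,x\mp g_o\lambda_1\right]\right)$ for some constants $g_o\in\mathbb{R}\setminus\{0\}$ and $\lambda_1,\lambda_2\in\mathbb{R}$.
   Context: The pseudo-Galilean space $G_3^1$ is $\mathbb{R}^3$ with the scalar product $\langle X,Y\rangle=x_1y_1$ if $x_1\neq0$ or $y_1\neq0$, and $\langle X,Y\rangle=x_2y_2-x_3y_3$ if $x_1=y_1=0$. An affine factorable surface of the second kind is $\phi(x,z)=(x,f(x)g(z+ax),z)$ with $a\neq0$ constant. Here $f'$ denotes $df/dx$ and $g',g''$ denote derivatives of $g$ with respect to its argument $v=z+ax$. The Gaussian curvature is taken to be $K=\dfrac{f'^2g'^2-f''f\,g''g}{(1-(fg')^2)^2}$. *)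

(* Defs.v *)
From Stdlib Require Import Reals.
Open Scope R_scope.

(* Gaussian curvature of the affine factorable surface of the second kind
   phi(x,z) = (x, f(x) g(z+ax), z) in G_3^1, as given in the paper:
   K = (f'^2 g'^2 - f'' f g'' g) / (1 - (f g')^2)^2,
   with f, f', f'' evaluated at x and g, g', g'' at v = z + a x.
   df, ddf (resp. dg, ddg) are the first and second derivatives of f (resp. g). *)
Definition gaussK (f df ddf g dg ddg : R -> R) (a x z : R) : R :=
  let v := z + a * x in
  (df x ^ 2 * dg v ^ 2 - ddf x * f x * ddg v * g v)
  / (1 - (f x * dg v) ^ 2) ^ 2.

(* Main.v *)
Require Import Defs.
From Stdlib Require Import Reals Lra Psatz Classical FunctionalExtensionality.
Open Scope R_scope.
Lemma mid_val (h : R -> R) u w : continuity h -> h u <> h w ->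
  exists t, h t = (h u + h w) / 2.
Proof.
  intros Hc Hne. set (m := (h u + h w)/2).
  assert (Hc' : continuity (fun t => h t - m)).
  { apply continuity_minus; [exact Hc| apply continuity_const; intros ? ?; reflexivity]. }
  destruct (Rle_dec u w) as [Hle|Hle].
  - destruct (IVT_cor _ u w Hc' Hle) as [t [_ Ht]].
    + unfold m; nra.
    + exists t; lra.
  - assert (Hle' : w <= u) by lra.
    destruct (IVT_cor _ w u Hc' Hle') as [t [_ Ht]].
    + unfold m; nra.
    + exists t; lra.
Qed.

Lemma sign_const (h : R -> R) : continuity h -> (forall x, h x <> 0) ->
  forall x, h x * h 0 > 0.
Proof.
  intros Hc Hn x.
  destruct (Rlt_dec 0 (h x * h 0)) as [|Hn']; [lra|].
  exfalso.
  destruct (Rle_dec x 0) as [Hle|Hle].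
  - destruct (IVT_cor h x 0 Hc Hle) as [t [_ Ht]]; [lra|]. exact (Hn t Ht).
  - assert (Hle' : 0 <= x) by lra.
    destruct (IVT_cor h 0 x Hc Hle') as [t [_ Ht]]; [lra|]. exact (Hn t Ht).
Qed.

Lemma const_d0 (k : R -> R) : (forall x, derivable_pt_lim k x 0) -> forall x, k x = k 0.
Proof.
  intros H x.
  assert (pr : derivable k) by (intro y; exists 0; apply H).
  pose proof (null_derivative_1 k (fun y => exist _ 0 (H y))) as C.
  apply C; intros; reflexivity.
Qed.

Lemma cont_of (k dk : R -> R) : (forall x, derivable_pt_lim k x (dk x)) -> continuity k.
Proof.
  intros H x. apply derivable_continuous_pt. exists (dk x). apply H.
Qed.

Lemma quad_const (P : R -> R) al ga de : continuity P -> (ga <> 0 \/ de <> 0) ->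
  (forall v, al * P v + ga * P v ^ 2 + de = 0) -> forall v, P v = P 0.
Proof.
  intros Hc Hn Hq v.
  destruct (Req_dec (P v) (P 0)) as [|Hne]; [assumption|exfalso].
  destruct (mid_val P v 0 Hc Hne) as [t Ht].
  pose proof (Hq v) as E1. pose proof (Hq 0) as E2. pose proof (Hq t) as E3.
  rewrite Ht in E3.
  set (r1 := P v) in *. set (r2 := P 0) in *.
  assert (A1 : al + ga * (r1 + r2) = 0).
  { apply (Rmult_eq_reg_l (r1 - r2)); [|lra]. nra. }
  assert (A2 : al + ga * (r1 + (r1+r2)/2) = 0).
  { apply (Rmult_eq_reg_l (r1 - (r1+r2)/2)); [|lra]. nra. }
  assert (G : ga = 0).
  { apply (Rmult_eq_reg_l ((r2 - r1)/2)); [|lra]. nra. }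
  subst ga. assert (al = 0) by lra. subst al. lra.
Qed.
Theorem mainTheorem3
  (a K0 : R) (f df ddf g dg ddg : R -> R)
  (ha : a <> 0)
  (hdf : forall x, derivable_pt_lim f x (df x))
  (hddf : forall x, derivable_pt_lim df x (ddf x))
  (hdg : forall v, derivable_pt_lim g v (dg v))
  (hddg : forall v, derivable_pt_lim dg v (ddg v))
  (hreg : forall x z, 1 - (f x * dg (z + a * x)) ^ 2 > 0)
  (hK0 : K0 <> 0)
  (hK : forall x z, gaussK f df ddf g dg ddg a x z = K0) :
  exists (go l1 l2 s : R), go <> 0 /\ (s = 1 \/ s = -1) /\
    forall x z,
      f x * g (z + a * x)
      = (go * (z + a * x) + l2) * (s * / go * tanh (sqrt K0 * x - s * go * l1)).
Proof.
  assert (Hr : forall x v, 1 - (f x * dg v) ^ 2 > 0).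
  { intros x v. pose proof (hreg x (v - a * x)) as H.
    replace (v - a * x + a * x) with v in H by ring. exact H. }
  assert (E : forall x v, df x ^2 * dg v ^2 - ddf x * f x * ddg v * g v
                = K0 * (1 - (f x * dg v)^2)^2).
  { intros x v. pose proof (hK x (v - a * x)) as H. unfold gaussK in H.
    replace (v - a * x + a * x) with v in H by ring.
    pose proof (Hr x v). rewrite <- H. field. lra. }
  clear hK hreg.
  assert (NC : exists x1, f x1 ^ 2 <> f 0 ^ 2).
  { apply not_all_not_ex. intro Hall.
    assert (Fc : forall x, f x ^ 2 = f 0 ^ 2).
    { intro x. apply NNPP. apply Hall. }
    assert (D0 : forall x, df x = 0).
    { intro x. destruct (Req_dec (f 0) 0) as [Z|Z].
      - assert (Hf : f = fun _ => 0).
        { apply functional_extensionality; intro y. pose proof (Fc y). rewrite Z in H. nra. }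
        apply (uniqueness_limite f x); [apply hdf|]. rewrite Hf. apply derivable_pt_lim_const.
      - assert (Hd : derivable_pt_lim (fun y => f y ^ 2) x (2 * f x * df x)).
        { replace (2 * f x * df x) with (INR 2 * f x ^ (2-1) * df x) by (simpl; ring).
          apply (derivable_pt_lim_comp f (fun y => y ^ 2)); [apply hdf|apply derivable_pt_lim_pow]. }
        assert (Hc : derivable_pt_lim (fun y => f y ^ 2) x 0).
        { assert (Hf : (fun y => f y ^ 2) = fun _ => f 0 ^ 2).
          { apply functional_extensionality; intro y; apply Fc. }
          rewrite Hf. apply derivable_pt_lim_const. }
        pose proof (uniqueness_limite _ _ _ _ Hd Hc) as U.
        assert (f x <> 0). { intro Z'. pose proof (Fc x). rewrite Z' in H. nra. }
        nra. }
    assert (DD0 : forall x, ddf x = 0).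
    { intro x. assert (Hf : df = fun _ => 0) by (apply functional_extensionality; exact D0).
      apply (uniqueness_limite df x); [apply hddf|]. rewrite Hf. apply derivable_pt_lim_const. }
    pose proof (E 0 0) as E0. pose proof (Hr 0 0). rewrite D0, DD0 in E0.
    assert (0 < (1 - (f 0 * dg 0) ^ 2) ^ 2) by (apply pow_lt; lra).
    nra. }
  destruct NC as [x1 Hx1].
  set (P := fun v => dg v ^ 2).
  assert (Pc : continuity P).
  { unfold P. intro v. apply derivable_continuous_pt.
    exists (INR 2 * dg v ^ (2-1) * ddg v).
    apply (derivable_pt_lim_comp dg (fun y => y ^ 2)); [apply hddg|apply derivable_pt_lim_pow]. }
  assert (Ee : forall x v, (df x ^ 2 + 2 * K0 * f x ^ 2) * P v - (ddf x * f x) * (ddg v * g v)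
            - K0 * (f x ^ 2) ^ 2 * P v ^ 2 - K0 = 0).
  { intros x v. unfold P. pose proof (E x v). nra. }
  assert (Pk : forall v, P v = P 0).
  { set (b1 := ddf x1 * f x1). set (b2 := ddf 0 * f 0).
    set (a1 := df x1 ^ 2 + 2 * K0 * f x1 ^ 2). set (a2 := df 0 ^ 2 + 2 * K0 * f 0 ^ 2).
    set (c1 := K0 * (f x1 ^ 2) ^ 2). set (c2 := K0 * (f 0 ^ 2) ^ 2).
    assert (Hc : c1 <> c2).
    { unfold c1, c2. intro Hcc. apply Hx1.
      assert ((f x1 ^ 2) ^ 2 = (f 0 ^ 2) ^ 2) by (apply (Rmult_eq_reg_l K0); auto).
      assert (0 <= f x1 ^ 2) by nra. assert (0 <= f 0 ^ 2) by nra. nra. }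
    destruct (Req_dec b1 b2) as [Hb|Hb].
    - apply (quad_const P (a1 - a2) (-(c1 - c2)) 0 Pc); [left; lra|].
      intro v. pose proof (Ee x1 v) as H1. pose proof (Ee 0 v) as H2.
      fold b1 a1 c1 in H1. fold b2 a2 c2 in H2. rewrite <- Hb in H2.
      transitivity ((a1 * P v - b1 * (ddg v * g v) - c1 * P v ^ 2 - K0)
                    - (a2 * P v - b1 * (ddg v * g v) - c2 * P v ^ 2 - K0)); [ring|].
      rewrite H1, H2; ring.
    - apply (quad_const P (b2 * a1 - b1 * a2) (-(b2 * c1 - b1 * c2)) (-(b2 - b1) * K0) Pc).
      { right. intro Z. apply Hb. apply Rmult_integral in Z. destruct Z; [lra|contradiction]. }
      intro v. pose proof (Ee x1 v) as H1. pose proof (Ee 0 v) as H2.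
      fold b1 a1 c1 in H1. fold b2 a2 c2 in H2.
      transitivity (b2 * (a1 * P v - b1 * (ddg v * g v) - c1 * P v ^ 2 - K0)
                    - b1 * (a2 * P v - b2 * (ddg v * g v) - c2 * P v ^ 2 - K0)); [ring|].
      rewrite H1, H2; ring. }
  set (g0 := dg 0).
  assert (Dg : forall v, dg v = g0).
  { intro v. destruct (Req_dec (dg v) g0) as [|Hne]; [assumption|exfalso].
    destruct (mid_val dg v 0 (cont_of dg ddg hddg) Hne) as [t Ht].
    pose proof (Pk v) as A1. pose proof (Pk t) as A2. unfold P in A1, A2.
    rewrite Ht in A2. fold g0 in A1, A2, Ht. nra. }
  assert (DDg : forall v, ddg v = 0).
  { intro v. assert (Hf : dg = fun _ => g0) by (apply functional_extensionality; exact Dg).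
    apply (uniqueness_limite dg v); [apply hddg|]. rewrite Hf. apply derivable_pt_lim_const. }
  assert (Gl : forall v, g v = g0 * v + g 0).
  { assert (Hk : forall v, derivable_pt_lim (fun y => g y - g0 * y) v 0).
    { intro v. replace 0 with (dg v - g0 * 1) by (rewrite Dg; ring).
      apply derivable_pt_lim_minus; [apply hdg|].
      apply derivable_pt_lim_scal. apply derivable_pt_lim_id. }
    intro v. pose proof (const_d0 _ Hk v) as C. simpl in C. lra. }
  assert (R1 : forall x, (g0 * df x) ^ 2 = K0 * (1 - (g0 * f x) ^ 2) ^ 2).
  { intro x. pose proof (E x 0) as H. rewrite Dg, DDg in H.
    replace ((g0 * f x) ^ 2) with ((f x * g0) ^ 2) by ring. rewrite <- H. ring. }
  assert (Hr' : forall x, 1 - (g0 * f x) ^ 2 > 0).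
  { intro x. pose proof (Hr x 0) as H. rewrite Dg in H. nra. }
  assert (Kp : K0 > 0).
  { pose proof (R1 0) as H. pose proof (Hr' 0).
    assert (0 < (1 - (g0 * f 0) ^ 2) ^ 2) by (apply pow_lt; lra).
    destruct (Rlt_dec 0 K0); [lra|]. nra. }
  assert (g0n : g0 <> 0).
  { intro Z. pose proof (R1 0) as H. rewrite Z in H. nra. }
  set (k := sqrt K0).
  assert (kk : k * k = K0) by (apply sqrt_sqrt; lra).
  assert (kp : k > 0) by (apply sqrt_lt_R0; lra).
  assert (dn : forall x, g0 * df x <> 0).
  { intros x Z. pose proof (R1 x) as H. rewrite Z in H. pose proof (Hr' x).
    assert (0 < (1 - (g0 * f x) ^ 2) ^ 2) by (apply pow_lt; lra). nra. }
  assert (Sg := sign_const (fun x => g0 * df x)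
     (continuity_scal _ _ (cont_of df ddf hddf)) dn). simpl in Sg.
  set (s := if Rlt_dec 0 (g0 * df 0) then 1 else -1).
  assert (s1 : s = 1 \/ s = -1) by (unfold s; destruct Rlt_dec; auto).
  assert (sp : s * (g0 * df 0) > 0).
  { unfold s; destruct Rlt_dec as [Hl|Hl]; [lra|]. pose proof (dn 0). 
    destruct (Rtotal_order (g0 * df 0) 0) as [|[|]]; lra. }
  assert (Key : forall x, g0 * df x = s * k * (1 - (g0 * f x) ^ 2)).
  { intro x. pose proof (R1 x) as H. rewrite <- kk in H.
    pose proof (Sg x). pose proof (Hr' x).
    assert (Hx : (g0 * df x - k * (1 - (g0 * f x) ^ 2)) * (g0 * df x + k * (1 - (g0 * f x) ^ 2)) = 0) by nra.
    apply Rmult_integral in Hx.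
    destruct s1 as [S|S]; rewrite S in sp |- *; destruct Hx as [Hx|Hx].
    - lra.
    - exfalso. assert (g0 * df x < 0) by nra. nra.
    - exfalso. assert (g0 * df x > 0) by nra. nra.
    - lra. }
  set (h := fun x => g0 * f x).
  assert (hd : forall x, derivable_pt_lim h x (g0 * df x)).
  { intro x. unfold h. apply derivable_pt_lim_scal. apply hdf. }
  set (w := fun x => (1 + h x) / (1 - h x) * exp (- (2 * s * k) * x)).
  assert (wd : forall x, derivable_pt_lim w x 0).
  { intro x.
    assert (Hn : 1 - h x <> 0) by (pose proof (Hr' x); unfold h; nra).
    assert (Q := derivable_pt_lim_div (fun y => 1 + h y) (fun y => 1 - h y) x _ _
       (derivable_pt_lim_plus _ _ x _ _ (derivable_pt_lim_const 1 x) (hd x))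
       (derivable_pt_lim_minus _ _ x _ _ (derivable_pt_lim_const 1 x) (hd x)) Hn).
    assert (Ex := derivable_pt_lim_comp (fun y => - (2 * s * k) * y) exp x _ _
       (derivable_pt_lim_scal _ _ x _ (derivable_pt_lim_id x)) (derivable_pt_lim_exp _)).
    assert (M := derivable_pt_lim_mult _ _ x _ _ Q Ex).
    match type of M with derivable_pt_lim _ _ ?l => replace 0 with l end.
    - exact M.
    - unfold comp, div_fct, Rsqr. simpl. rewrite Key. unfold h.
      field. unfold h in Hn. exact Hn. }
  set (C := w 0).
  assert (wc : forall x, w x = C) by (intro x; apply (const_d0 w wd)).
  assert (Cp : C > 0).
  { unfold C, w. pose proof (Hr' 0). unfold h. pose proof (exp_pos (- (2 * s * k) * 0)).
    apply Rmult_lt_0_compat; [|lra]. apply Rdiv_lt_0_compat; nra. }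
  set (c := ln C / 2).
  assert (Th : forall x, h x = tanh (s * k * x + c)).
  { intro x. set (y := s * k * x + c).
    assert (Hn : 1 - h x <> 0) by (pose proof (Hr' x); unfold h; nra).
    assert (Y2 : exp y * exp y = (1 + h x) / (1 - h x)).
    { rewrite <- exp_plus. replace (y + y) with (2 * s * k * x + ln C) by (unfold y, c; field).
      rewrite exp_plus, exp_ln by lra. rewrite <- (wc x). unfold w.
      assert (Ee1 : exp (2*s*k*x) * exp (-(2*s*k)*x) = 1).
      { rewrite <- exp_plus. replace (2 * s * k * x + - (2 * s * k) * x) with 0 by ring. apply exp_0. }
      transitivity ((1 + h x) / (1 - h x) * (exp (2*s*k*x) * exp (-(2*s*k)*x))); [ring|].
      rewrite Ee1; ring. }
    pose proof (exp_pos y) as Yp.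
    unfold tanh, sinh, cosh. rewrite exp_Ropp.
    replace ((exp y - / exp y) / 2 / ((exp y + / exp y) / 2))
      with ((exp y * exp y - 1) / (exp y * exp y + 1)) by (field; nra).
    rewrite Y2. field. split; lra. }
  assert (todd : forall y, tanh (- y) = - tanh y).
  { intro y. unfold tanh, sinh, cosh. rewrite Ropp_involutive.
    pose proof (exp_pos y). pose proof (exp_pos (-y)). field. lra. }
  exists g0, (- c / g0), (g 0), s. split; [exact g0n|]. split; [exact s1|].
  intros x z. rewrite (Gl (z + a * x)).
  assert (Fx : f x = h x / g0) by (unfold h; field; exact g0n).
  rewrite Fx, Th.
  replace (k * x - s * g0 * (- c / g0)) with (k * x + s * c) by (field; exact g0n).
  destruct s1 as [S|S]; rewrite S.
  - replace (1 * k * x + c) with (k * x + 1 * c) by ring. field. exact g0n.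
  - replace (-1 * k * x + c) with (- (k * x + -1 * c)) by ring. rewrite todd. field. exact g0n.
Qed.
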